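(* Consider the cubic ($p=3$) Gauss–Lobatto element on $[-1,1]$ and real constants $\bar\varepsilon_1,\bar\varepsilon_2,\bar\varepsilon_3$. Define the artificial dissipation matrix $$\mathcal{D}_{AD}=\bar\varepsilon_1(\mathcal{D}_x)^T\mathcal{P}\mathcal{D}_x+\bar\varepsilon_2(\mathcal{D}_x^2)^T\mathcal{P}\mathcal{D}_x^2+\bar\varepsilon_3(\mathcal{D}_x^3)^T\mathcal{P}\mathcal{D}_x^3\in\mathbb{R}^{4\times4}.$$ If $$\bar\varepsilon_1>0,\qquad\bar\varepsilon_2\ge-\frac{\bar\varepsilon_1}{3},\qquad\bar\varepsilon_3\ge-\frac{\bar\varepsilon_1}{45}-\frac{\bar\varepsilon_2}{3},$$ then $\mathcal{D}_{AD}$ is positive semi-definite.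
   Context: For $p=3$ on $[-1,1]$ the Gauss–Lobatto nodes are $-1,-1/\sqrt5,1/\sqrt5,1$ with weights $1/6,5/6,5/6,1/6$; $\mathcal{P}$ is the diagonal matrix of these weights; $\ell_0,\dots,\ell_3$ are the cubic Lagrange basis polynomials on these nodes; $\mathcal{D}_x$ is the $4\times4$ matrix with $(\mathcal{D}_x)_{kj}=\ell_j'(x_k)$, and $\mathcal{D}_x^i$ denotes its $i$-th power, whose $(k,j)$ entry is $\ell_j^{(i)}(x_k)$. *)

(* Defs.v *)
From mathcomp Require Import all_boot all_order all_algebra.
Set Implicit Arguments. Unset Strict Implicit. Unset Printing Implicit Defensive.
Import Order.TTheory GRing.Theory Num.Theory.
Local Open Scope ring_scope.

Definition gl_node (R : rcfType) (k : 'I_4) : R :=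
  match val k with
  | 0 => -1
  | 1 => - (Num.sqrt 5)^-1
  | 2 => (Num.sqrt 5)^-1
  | _ => 1
  end.

Definition gl_weight (R : rcfType) (k : 'I_4) : R :=
  match val k with
  | 0 => 6^-1
  | 1 => 5 / 6
  | 2 => 5 / 6
  | _ => 6^-1
  end.

Definition gl_P (R : rcfType) : 'M[R]_4 := \matrix_(i, j) (if i == j then gl_weight R i else 0).

Definition lagrange (R : rcfType) (j : 'I_4) : {poly R} :=
  \prod_(m < 4 | m != j) ((gl_node R j - gl_node R m)^-1 *: ('X - (gl_node R m)%:P)).

Definition gl_Dx (R : rcfType) : 'M[R]_4 :=
  \matrix_(k, j) ((lagrange R j)^`()).[gl_node R k].

Definition D_AD (R : rcfType) (e1 e2 e3 : R) : 'M[R]_4 :=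
  e1 *: ((gl_Dx R)^T *m gl_P R *m gl_Dx R)
  + e2 *: (((gl_Dx R) ^+ 2)^T *m gl_P R *m (gl_Dx R) ^+ 2)
  + e3 *: (((gl_Dx R) ^+ 3)^T *m gl_P R *m (gl_Dx R) ^+ 3).

Definition psd (R : rcfType) (n : nat) (A : 'M[R]_n) : Prop :=
  forall v : 'cV[R]_n, 0 <= ((v^T *m A *m v) 0 0).

(* Main.v *)
Require Import Defs.
From mathcomp Require Import all_boot all_order all_algebra.
Import Order.TTheory GRing.Theory Num.Theory.
Local Open Scope ring_scope.
From mathcomp Require Import ring lra.

Section Aux.
Variable R : rcfType.

Definition node' (t:R) (k:'I_4) : R :=
  match val k with 0%N => -1 | 1%N => -t | 2%N => t | _ => 1 end.

Lemma modeq (q t x y : R) : t^+2 = 5^-1 -> x - y = (t^+2 - 5^-1) * q -> x = y.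
Proof. by move=> -> /eqP; rewrite subrr mul0r subr_eq0 => /eqP. Qed.

Lemma ge0_mod (q t x y : R) : t^+2 = 5^-1 -> 0 <= y -> x - y = (t^+2 - 5^-1) * q -> 0 <= x.
Proof. by move=> ht hy /(@modeq q t x y ht) ->. Qed.

Lemma inv_of (a b : R) : a * b = 1 -> a^-1 = b.
Proof.
move=> h; have a0 : a != 0.
  by apply/eqP => a0; move: h; rewrite a0 mul0r => /eqP; rewrite eq_sym oner_eq0.
by apply: (mulfI a0); rewrite mulfV // h.
Qed.

Definition idiff (t : R) (k j : 'I_4) : R :=
  match val k, val j with
  | 0%N, 0%N => 0
  | 0%N, 1%N => ((- (5 / 4)) * t + (- (5 / 4)))
  | 0%N, 2%N => ((5 / 4) * t + (- (5 / 4)))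
  | 0%N, 3%N => ((- (1 / 2)))
  | 1%N, 0%N => ((5 / 4) * t + (5 / 4))
  | 1%N, 1%N => 0
  | 1%N, 2%N => ((- (5 / 2)) * t)
  | 1%N, 3%N => ((5 / 4) * t + (- (5 / 4)))
  | 2%N, 0%N => ((- (5 / 4)) * t + (5 / 4))
  | 2%N, 1%N => ((5 / 2) * t)
  | 2%N, 2%N => 0
  | 2%N, 3%N => ((- (5 / 4)) * t + (- (5 / 4)))
  | 3%N, 0%N => ((1 / 2))
  | 3%N, 1%N => ((- (5 / 4)) * t + (5 / 4))
  | 3%N, 2%N => ((5 / 4) * t + (5 / 4))
  | 3%N, 3%N => 0
  | _, _ => 0
  end.

Lemma inv_diff t (ht : t^+2 = 5^-1) j m : (node' t j - node' t m)^-1 = idiff t j m.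
Proof.
case: j => [[|[|[|[|j]]]] Hj] //; case: m => [[|[|[|[|m]]]] Hm] //; rewrite /node' /idiff /=.
1: by rewrite subrr invr0.
1: by apply: inv_of; apply: (@modeq ((- (5 / 4))) _ _ _ ht); field.
1: by apply: inv_of; apply: (@modeq ((- (5 / 4))) _ _ _ ht); field.
1: by apply: inv_of; apply: (@modeq 0 _ _ _ ht); field.
1: by apply: inv_of; apply: (@modeq ((- (5 / 4))) _ _ _ ht); field.
1: by rewrite subrr invr0.
1: by apply: inv_of; apply: (@modeq (5) _ _ _ ht); field.
1: by apply: inv_of; apply: (@modeq ((- (5 / 4))) _ _ _ ht); field.
1: by apply: inv_of; apply: (@modeq ((- (5 / 4))) _ _ _ ht); field.
1: by apply: inv_of; apply: (@modeq (5) _ _ _ ht); field.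
1: by rewrite subrr invr0.
1: by apply: inv_of; apply: (@modeq ((- (5 / 4))) _ _ _ ht); field.
1: by apply: inv_of; apply: (@modeq 0 _ _ _ ht); field.
1: by apply: inv_of; apply: (@modeq ((- (5 / 4))) _ _ _ ht); field.
1: by apply: inv_of; apply: (@modeq ((- (5 / 4))) _ _ _ ht); field.
1: by rewrite subrr invr0.
Qed.

Definition d1 (t : R) (k j : 'I_4) : R :=
  match val k, val j with
  | 0%N, 0%N => ((- 3))
  | 0%N, 1%N => ((25 / 4) * t + (5 / 4))
  | 0%N, 2%N => ((- (25 / 4)) * t + (5 / 4))
  | 0%N, 3%N => ((1 / 2))
  | 1%N, 0%N => ((- (5 / 4)) * t + (- (1 / 4)))
  | 1%N, 1%N => 0
  | 1%N, 2%N => ((5 / 2) * t)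
  | 1%N, 3%N => ((- (5 / 4)) * t + (1 / 4))
  | 2%N, 0%N => ((5 / 4) * t + (- (1 / 4)))
  | 2%N, 1%N => ((- (5 / 2)) * t)
  | 2%N, 2%N => 0
  | 2%N, 3%N => ((5 / 4) * t + (1 / 4))
  | 3%N, 0%N => ((- (1 / 2)))
  | 3%N, 1%N => ((25 / 4) * t + (- (5 / 4)))
  | 3%N, 2%N => ((- (25 / 4)) * t + (- (5 / 4)))
  | 3%N, 3%N => (3)
  | _, _ => 0
  end.
Definition d2 (t : R) (k j : 'I_4) : R :=
  match val k, val j with
  | 0%N, 0%N => (5)
  | 0%N, 1%N => ((- (75 / 4)) * t + (- (5 / 4)))
  | 0%N, 2%N => ((75 / 4) * t + (- (5 / 4)))
  | 0%N, 3%N => ((- (5 / 2)))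
  | 1%N, 0%N => ((15 / 4) * t + (5 / 4))
  | 1%N, 1%N => ((- 5))
  | 1%N, 2%N => ((5 / 2))
  | 1%N, 3%N => ((- (15 / 4)) * t + (5 / 4))
  | 2%N, 0%N => ((- (15 / 4)) * t + (5 / 4))
  | 2%N, 1%N => ((5 / 2))
  | 2%N, 2%N => ((- 5))
  | 2%N, 3%N => ((15 / 4) * t + (5 / 4))
  | 3%N, 0%N => ((- (5 / 2)))
  | 3%N, 1%N => ((75 / 4) * t + (- (5 / 4)))
  | 3%N, 2%N => ((- (75 / 4)) * t + (- (5 / 4)))
  | 3%N, 3%N => (5)
  | _, _ => 0
  end.
Definition d3 (t : R) (k j : 'I_4) : R :=
  match val k, val j with
  | 0%N, 0%N => ((- (15 / 4)))
  | 0%N, 1%N => ((75 / 4) * t)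
  | 0%N, 2%N => ((- (75 / 4)) * t)
  | 0%N, 3%N => ((15 / 4))
  | 1%N, 0%N => ((- (15 / 4)))
  | 1%N, 1%N => ((75 / 4) * t)
  | 1%N, 2%N => ((- (75 / 4)) * t)
  | 1%N, 3%N => ((15 / 4))
  | 2%N, 0%N => ((- (15 / 4)))
  | 2%N, 1%N => ((75 / 4) * t)
  | 2%N, 2%N => ((- (75 / 4)) * t)
  | 2%N, 3%N => ((15 / 4))
  | 3%N, 0%N => ((- (15 / 4)))
  | 3%N, 1%N => ((75 / 4) * t)
  | 3%N, 2%N => ((- (75 / 4)) * t)
  | 3%N, 3%N => ((15 / 4))
  | _, _ => 0
  end.

Definition D1 t : 'M[R]_4 := \matrix_(k, j) d1 t k j.
Definition D2 t : 'M[R]_4 := \matrix_(k, j) d2 t k j.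
Definition D3 t : 'M[R]_4 := \matrix_(k, j) d3 t k j.

Lemma LD1gen t (ht : t^+2 = 5^-1) :
  \matrix_(k, j) ((\prod_(m < 4 | m != j) ((node' t j - node' t m)^-1 *: ('X - (node' t m)%:P)))^`()).[node' t k]
  = D1 t.
Proof.
apply/matrixP => k j; rewrite !mxE.
case: k => [[|[|[|[|k]]]] Hk] //; case: j => [[|[|[|[|j]]]] Hj] //;
rewrite big_mkcond !big_ord_recr big_ord0 /= ?mul1r ?mulr1 !derivM !derivZ !derivXsubC !hornerE /= !(inv_diff t ht) /node' /idiff /d1 /=.
1: by apply: (@modeq ((- (25 / 32)) * t^+2 + (145 / 32)) _ _ _ ht); field.
1: by apply: (@modeq ((- (125 / 16)) * t^+2 + (- (125 / 16)) * t + (25 / 4)) _ _ _ ht); field.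
1: by apply: (@modeq ((- (125 / 16)) * t^+2 + (125 / 16) * t + (25 / 4)) _ _ _ ht); field.
1: by apply: (@modeq ((25 / 32) * t^+2 + (- (45 / 32))) _ _ _ ht); field.
1: by apply: (@modeq ((25 / 16) * t^+2 + (25 / 16) * t + (- (5 / 4))) _ _ _ ht); field.
1: by apply: (@modeq ((- (625 / 32)) * t^+3 + (625 / 32) * t) _ _ _ ht); field.
1: by apply: (@modeq ((125 / 32) * t^+3 + (- (225 / 32)) * t) _ _ _ ht); field.
1: by apply: (@modeq ((- (25 / 16)) * t^+2 + (25 / 16) * t + (5 / 4)) _ _ _ ht); field.
1: by apply: (@modeq ((25 / 16) * t^+2 + (- (25 / 16)) * t + (- (5 / 4))) _ _ _ ht); field.
1: by apply: (@modeq ((- (125 / 32)) * t^+3 + (225 / 32) * t) _ _ _ ht); field.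
1: by apply: (@modeq ((625 / 32) * t^+3 + (- (625 / 32)) * t) _ _ _ ht); field.
1: by apply: (@modeq ((- (25 / 16)) * t^+2 + (- (25 / 16)) * t + (5 / 4)) _ _ _ ht); field.
1: by apply: (@modeq ((- (25 / 32)) * t^+2 + (45 / 32)) _ _ _ ht); field.
1: by apply: (@modeq ((125 / 16) * t^+2 + (- (125 / 16)) * t + (- (25 / 4))) _ _ _ ht); field.
1: by apply: (@modeq ((125 / 16) * t^+2 + (125 / 16) * t + (- (25 / 4))) _ _ _ ht); field.
1: by apply: (@modeq ((25 / 32) * t^+2 + (- (145 / 32))) _ _ _ ht); field.
Qed.

Lemma LD2 t (ht : t^+2 = 5^-1) : D1 t *m D1 t = D2 t.
Proof.
apply/matrixP => k j; rewrite !mxE.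
case: k => [[|[|[|[|k]]]] Hk] //; case: j => [[|[|[|[|j]]]] Hj] //;
rewrite !big_ord_recr big_ord0 /= !mxE /d1 /d2 /d3 /=.
1: by apply: (@modeq ((- (125 / 8))) _ _ _ ht); field.
1: by apply: (@modeq ((125 / 8)) _ _ _ ht); field.
1: by apply: (@modeq ((125 / 8)) _ _ _ ht); field.
1: by apply: (@modeq ((- (125 / 8))) _ _ _ ht); field.
1: by apply: (@modeq ((25 / 8)) _ _ _ ht); field.
1: by apply: (@modeq ((- (175 / 8))) _ _ _ ht); field.
1: by apply: (@modeq ((125 / 8)) _ _ _ ht); field.
1: by apply: (@modeq ((25 / 8)) _ _ _ ht); field.
1: by apply: (@modeq ((25 / 8)) _ _ _ ht); field.
1: by apply: (@modeq ((125 / 8)) _ _ _ ht); field.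
1: by apply: (@modeq ((- (175 / 8))) _ _ _ ht); field.
1: by apply: (@modeq ((25 / 8)) _ _ _ ht); field.
1: by apply: (@modeq ((- (125 / 8))) _ _ _ ht); field.
1: by apply: (@modeq ((125 / 8)) _ _ _ ht); field.
1: by apply: (@modeq ((125 / 8)) _ _ _ ht); field.
1: by apply: (@modeq ((- (125 / 8))) _ _ _ ht); field.
Qed.

Lemma LD3 t (ht : t^+2 = 5^-1) : D1 t *m D2 t = D3 t.
Proof.
apply/matrixP => k j; rewrite !mxE.
case: k => [[|[|[|[|k]]]] Hk] //; case: j => [[|[|[|[|j]]]] Hj] //;
rewrite !big_ord_recr big_ord0 /= !mxE /d1 /d2 /d3 /=.
1: by apply: (@modeq ((375 / 8)) _ _ _ ht); field.
1: by apply: (@modeq 0 _ _ _ ht); field.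
1: by apply: (@modeq 0 _ _ _ ht); field.
1: by apply: (@modeq ((- (375 / 8))) _ _ _ ht); field.
1: by apply: (@modeq ((- (75 / 8))) _ _ _ ht); field.
1: by apply: (@modeq 0 _ _ _ ht); field.
1: by apply: (@modeq 0 _ _ _ ht); field.
1: by apply: (@modeq ((75 / 8)) _ _ _ ht); field.
1: by apply: (@modeq ((- (75 / 8))) _ _ _ ht); field.
1: by apply: (@modeq 0 _ _ _ ht); field.
1: by apply: (@modeq 0 _ _ _ ht); field.
1: by apply: (@modeq ((75 / 8)) _ _ _ ht); field.
1: by apply: (@modeq ((375 / 8)) _ _ _ ht); field.
1: by apply: (@modeq 0 _ _ _ ht); field.
1: by apply: (@modeq 0 _ _ _ ht); field.
1: by apply: (@modeq ((- (375 / 8))) _ _ _ ht); field.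
Qed.


Definition o0 : 'I_4 := @Ordinal 4 0 isT.
Definition o1 : 'I_4 := @Ordinal 4 1 isT.
Definition o2 : 'I_4 := @Ordinal 4 2 isT.
Definition o3 : 'I_4 := @Ordinal 4 3 isT.

Definition lin (M : 'M[R]_4) (v : 'cV[R]_4) (i : 'I_4) : R :=
  M i o0 * v o0 0 + M i o1 * v o1 0 + M i o2 * v o2 0 + M i o3 * v o3 0.

Lemma sum4 (F : 'I_4 -> R) : \sum_(i < 4) F i = F o0 + F o1 + F o2 + F o3.
Proof.
rewrite !big_ord_recr big_ord0 /= [0 + _]addrC addr0.
by congr (_ + _ + _ + _); congr F; apply: val_inj.
Qed.

Lemma qf (M : 'M[R]_4) (v : 'cV[R]_4) :
  (v^T *m (M^T *m gl_P R *m M) *m v) 0 0 =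
  6^-1 * (lin M v o0)^+2 + 5/6 * (lin M v o1)^+2 + 5/6 * (lin M v o2)^+2 + 6^-1 * (lin M v o3)^+2.
Proof.
have -> : v^T *m (M^T *m gl_P R *m M) *m v = (M *m v)^T *m gl_P R *m (M *m v).
  by rewrite !trmx_mul !mulmxA.
rewrite !mxE !sum4 !mxE !sum4 !mxE /= /lin /gl_weight /= !sum4.
ring.
Qed.

Lemma fin (e1 e2 e3 A B C : R) : 0 < e1 -> - (e1 / 3) <= e2 -> - (e1 / 45) - e2 / 3 <= e3 ->
  0 <= e1 * (2 * A^+2 + 8/3 * B^+2 + 8/5 * C^+2) + e2 * (8 * B^+2 + 24 * C^+2) + e3 * (72 * C^+2).
Proof.
move=> h1 h2 h3.
have -> : e1 * (2 * A^+2 + 8/3 * B^+2 + 8/5 * C^+2) + e2 * (8 * B^+2 + 24 * C^+2) + e3 * (72 * C^+2)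
  = (2 * e1) * A^+2 + (8/3 * e1 + 8 * e2) * B^+2 + (8/5 * e1 + 24 * e2 + 72 * e3) * C^+2 by ring.
have ha : 0 <= 2 * e1 by lra.
have hb : 0 <= 8/3 * e1 + 8 * e2 by lra.
have hc : 0 <= 8/5 * e1 + 24 * e2 + 72 * e3 by lra.
by rewrite !addr_ge0 // mulr_ge0 // sqr_ge0.
Qed.

Lemma qZ (a : R) (A : 'M[R]_4) (v : 'cV[R]_4) :
  (v^T *m (a *: A) *m v) 0 0 = a * (v^T *m A *m v) 0 0.
Proof. by rewrite -scalemxAr -scalemxAl mxE. Qed.

Lemma qD (A B : 'M[R]_4) (v : 'cV[R]_4) :
  (v^T *m (A + B) *m v) 0 0 = (v^T *m A *m v) 0 0 + (v^T *m B *m v) 0 0.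
Proof. by rewrite mulmxDr mulmxDl mxE. Qed.

End Aux.

Theorem proposition6 (R : rcfType) (e1 e2 e3 : R) :
  0 < e1 -> - (e1 / 3) <= e2 -> - (e1 / 45) - e2 / 3 <= e3 ->
  psd (D_AD e1 e2 e3).
Proof.
move=> h1 h2 h3 v.
have hs : ((Num.sqrt (5:R))^-1)^+2 = 5^-1.
  by rewrite exprVn sqr_sqrtr // ler0n.
have E1 : gl_Dx R = @D1 R ((Num.sqrt 5)^-1) := @LD1gen R _ hs.
have E2 : gl_Dx R ^+ 2 = @D2 R ((Num.sqrt 5)^-1) by rewrite expr2 -mulmxE E1 (@LD2 R _ hs).
have E3 : gl_Dx R ^+ 3 = @D3 R ((Num.sqrt 5)^-1) by rewrite exprS E2 -mulmxE E1 (@LD3 R _ hs).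
rewrite /D_AD E3 E2 E1.
rewrite !qD !qZ !qf.
rewrite /lin !mxE /d1 /d2 /d3 /=.
move: (v o0 0) (v o1 0) (v o2 0) (v o3 0) => v0 v1 v2 v3.
move: ((Num.sqrt (5:R))^-1) hs => t ht.
apply: (@ge0_mod _ ((125 / 48) * v0^+2 * e1 + (375 / 16) * v0^+2 * e2 + (- (125 / 24)) * v0 * v1 * e1 + (- (125 / 24)) * v0 * v2 * e1 + (125 / 24) * v0 * v3 * e1 + (- (375 / 8)) * v0 * v3 * e2 + (125 / 48) * v1^+2 * e1 + (- (1875 / 16)) * v1^+2 * e2 + (125 / 24) * v1 * v2 * e1 + (1875 / 8) * v1 * v2 * e2 + (- (125 / 24)) * v1 * v3 * e1 + (125 / 48) * v2^+2 * e1 + (- (1875 / 16)) * v2^+2 * e2 + (- (125 / 24)) * v2 * v3 * e1 + (125 / 48) * v3^+2 * e1 + (375 / 16) * v3^+2 * e2) _ _ _ ht (@fin R e1 e2 e3 ((- (1 / 2)) * v0 + (1 / 2) * v3) ((5 / 8) * v0 + (- (5 / 8)) * v1 + (- (5 / 8)) * v2 + (5 / 8) * v3) ((25 / 8) * t * v1 + (- (25 / 8)) * t * v2 + (- (5 / 8)) * v0 + (5 / 8) * v3) h1 h2 h3)).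
by field.
Qed.
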